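(* Let $g_1,g_2$ be monic divisors of $x^m-1$, $v_1,v_2\in\mathcal{R}$ with $\gcd(v_1v_2-1,x^m-1)=1$, and let $\mathcal{C}$ be the QC code of length $2m$ generated by $(g_1,v_1g_1)$ and $(v_2g_2,g_2)$. Then: (A) over $\mathbb{F}_q$, the Euclidean dual $\mathcal{C}^{\perp_E}$ is the QC code generated by $(g_1^{\perp},-\overline{v_2}g_1^{\perp})$ and $(-\overline{v_1}g_2^{\perp},g_2^{\perp})$; (B) over $\mathbb{F}_{q^2}$, the Hermitian dual $\mathcal{C}^{\perp_H}$ is the QC code generated by $(g_1^{\perp_H},-\overline{v_2}^{[q]}g_1^{\perp_H})$ and $(-\overline{v_1}^{[q]}g_2^{\perp_H},g_2^{\perp_H})$; (C) over $\mathbb{F}_q$, the symplectic dual $\mathcal{C}^{\perp_S}$ is the QC code generated by $(g_2^{\perp},\overline{v_1}g_2^{\perp})$ and $(\overline{v_2}g_1^{\perp},g_1^{\perp})$.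
   Context: $q$ a prime power; $\mathcal{R}=\mathbb{F}[x]/(x^m-1)$ with $\mathbb{F}$ as indicated; elements identified with representatives of degree $<m$; $[k]=(k_0,\dots,k_{m-1})$; $\overline{k}(x)=k(x^{-1})\bmod(x^m-1)$; $k^{[q]}=\sum k_i^qx^i$; for a nonzero polynomial $f$, $f^*(x)=x^{\deg f}f(1/x)$; for $k\in\mathcal{R}$, with $f=\frac{x^m-1}{\gcd(k,x^m-1)}$, $k^{\perp}=f(0)^{-1}f^*$, and $k^{\perp_H}=(k^{[q]})^{\perp}$. The QC code generated by $(u_{i1},u_{i2})$, $i=1,2$, is $\{([r_1u_{11}+r_2u_{21}],[r_1u_{12}+r_2u_{22}]):r_1,r_2\in\mathcal{R}\}\subseteq\mathbb{F}^{2m}$. Inner products: Euclidean $\sum u_iv_i$; Hermitian $\sum u_i^qv_i$; symplectic on $\mathbb{F}^{2m}$: $\sum_{i=1}^m(u_iv_{m+i}-u_{m+i}v_i)$; duals are the orthogonal complements w.r.t. these forms. *)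

(* Defs.v *)
From mathcomp Require Import all_boot all_order all_algebra all_field.
Set Implicit Arguments. Unset Strict Implicit. Unset Printing Implicit Defensive.
Import GRing.Theory.
Local Open Scope ring_scope.

(* R = F[x]/(x^m - 1): elements are polynomials, reduced modulo x^m - 1. *)
Section QC.
Variables (F : fieldType) (m : nat).

Definition xm1 : {poly F} := 'X^m - 1.

Definition modR (k : {poly F}) : {poly F} := k %% xm1.

Definition vecR (k : {poly F}) : 'rV[F]_m := \row_(i < m) (modR k)`_i.

(* kbar(x) = k(x^{-1}) mod (x^m - 1) *)
Definition barR (k : {poly F}) : {poly F} :=
  modR (\sum_(i < m) (modR k)`_i *: 'X^((m - i) %% m)).

Definition frobR (q : nat) (k : {poly F}) : {poly F} :=
  map_poly (fun c => c ^+ q) (modR k).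

Definition recip (f : {poly F}) : {poly F} :=
  \poly_(i < size f) f`_(size f - 1 - i).

Definition perpR (k : {poly F}) : {poly F} :=
  let f := xm1 %/ gcdp (modR k) xm1 in (f.[0])^-1 *: recip f.

Definition perpHR (q : nat) (k : {poly F}) : {poly F} := perpR (frobR q k).

(* vectors of F^{2m}, written as ([a],[b]) with a the first m coordinates *)
Definition word := ('rV[F]_m * 'rV[F]_m)%type.

Definition QCcode (u11 u12 u21 u22 : {poly F}) (c : word) : Prop :=
  exists r1 r2 : {poly F},
    c = (vecR (r1 * u11 + r2 * u21), vecR (r1 * u12 + r2 * u22)).

Definition formE (u v : word) : F :=
  \sum_(i < m) (u.1 0 i * v.1 0 i) + \sum_(i < m) (u.2 0 i * v.2 0 i).

Definition formH (q : nat) (u v : word) : F :=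
  \sum_(i < m) (u.1 0 i ^+ q * v.1 0 i) + \sum_(i < m) (u.2 0 i ^+ q * v.2 0 i).

Definition formS (u v : word) : F :=
  \sum_(i < m) (u.1 0 i * v.2 0 i - u.2 0 i * v.1 0 i).

Definition dual (b : word -> word -> F) (C : word -> Prop) (v : word) : Prop :=
  forall u, C u -> b u v = 0.

End QC.

(* Main.v *)
From HB Require Import structures.
Require Import Defs.
From mathcomp Require Import all_boot all_order all_algebra all_field.
From mathcomp Require Import ring.
Import GRing.Theory.
Local Open Scope ring_scope.
Set Implicit Arguments. Unset Strict Implicit. Unset Printing Implicit Defensive.

Lemma charnat (F : finFieldType) (q : nat) : #|F| = (q ^ 2)%N -> [pchar F].-nat q.
Proof.
move=> Hq; have [p pr_p chp] := finPcharP F.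
have := card_pprimeChar chp => /= Hc.
have : (q %| p ^ logn p #|F|)%N by rewrite -Hc Hq dvdn_exp.
case/(dvdn_pfactor _ _ pr_p) => k _ ->.
by rewrite pnatX (eq_pnat _ (pcharf_eq chp)) pnat_id.
Qed.

Section Fr.
Variables (F : finFieldType) (q : nat).
Hypothesis Hq : #|F| = (q ^ 2)%N.
Definition frq (c : F) := c ^+ q.
Lemma frq_add : zmod_morphism frq.
Proof. by move=> a b; rewrite /frq exprDn_pchar ?exprNn_pchar // charnat. Qed.
Lemma frq_mul : monoid_morphism frq.
Proof. by split; [rewrite /frq expr1n | move=> a b; rewrite /frq exprMn]. Qed.
Definition frqM : {rmorphism F -> F} :=
  HB.pack frq (GRing.isZmodMorphism.Build _ _ _ frq_add) (GRing.isMonoidMorphism.Build _ _ _ frq_mul).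
Lemma frqK c : frq (frq c) = c.
Proof. by rewrite /frq -exprM mulnn -Hq expf_card. Qed.
End Fr.


Section Core.
Variables (F : fieldType) (m : nat).
Hypothesis hm : (0 < m)%N.

Local Notation xm := (xm1 F m).
Local Notation Q := {poly %/ xm}.

Lemma size_xm : size xm = m.+1.
Proof. by rewrite /xm1 size_Xn_sub_1. Qed.

Lemma monic_xm : xm \is monic.
Proof. by rewrite /xm1 monicXnsubC. Qed.

Lemma mk_monic_xm : mk_monic xm = xm.
Proof. by rewrite /mk_monic size_xm monic_xm ltnS hm. Qed.

Local Notation ii := (in_qpoly xm).

Lemma iiE p : (ii p : {poly F}) = modR m p.
Proof. by rewrite /in_qpoly /= mk_monic_xm /modR (Pdiv.IdomainMonic.modpE monic_xm). Qed.

Lemma ii_mod p : ii (modR m p) = ii p.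
Proof. by apply/val_inj; rewrite [LHS]iiE [RHS]iiE /modR modp_id. Qed.

Lemma ii_val (x : Q) : ii x = x.
Proof. by apply/val_inj; rewrite [LHS]iiE /modR modp_small // -{2}mk_monic_xm size_mk_monic. Qed.

Lemma ii_xm : ii xm = 0.
Proof. by apply/val_inj; rewrite [LHS]iiE /modR modpp. Qed.

Lemma size_modR (p : {poly F}) : (size (modR m p) <= m)%N.
Proof. by rewrite -ltnS -size_xm ltn_modp -size_poly_eq0 size_xm. Qed.

Lemma ii_small (p : {poly F}) : (size p <= m)%N -> (ii p : {poly F}) = p.
Proof. by move=> h; rewrite iiE /modR modp_small // size_xm ltnS. Qed.

Lemma ii_XmE : ii ('X^m) = 1.
Proof.
have -> : 'X^m = xm + 1 by rewrite /xm1 subrK.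
by rewrite rmorphD /= ii_xm add0r rmorph1. Qed.

Lemma iXn n : ii ('X^n) = ii ('X^(n %% m)).
Proof.
rewrite {1}(divn_eq n m) exprD rmorphM mulnC exprM rmorphXn /= ii_XmE.
by rewrite expr1n mul1r.
Qed.

Lemma iXn_eq a b : a = b %[mod m] -> ii ('X^a) = ii ('X^b).
Proof. by move=> h; rewrite iXn h -iXn. Qed.

Lemma poly_summ (p : {poly F}) : (size p <= m)%N -> p = \sum_(i < m) p`_i *: 'X^i.
Proof.
move=> h; rewrite -poly_def; apply/polyP => j; rewrite coef_poly.
by case: ltnP => // hj; rewrite nth_default // (leq_trans h hj).
Qed.

Lemma coef_ii_Xn n j : (ii ('X^n) : {poly F})`_j = ((j == n %% m)%N)%:R.
Proof.
rewrite iXn ii_small ?coefXn // size_polyXn ltn_mod //.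
Qed.


Definition bar (p : {poly F}) := p \Po 'X^(m.-1).

Lemma barM p q : bar (p * q) = bar p * bar q. Proof. exact: comp_polyM. Qed.
Lemma barD p q : bar (p + q) = bar p + bar q. Proof. exact: comp_polyD. Qed.
Lemma barB p q : bar (p - q) = bar p - bar q. Proof. exact: comp_polyB. Qed.
Lemma barN p : bar (- p) = - bar p.
Proof. by rewrite -sub0r barB /bar comp_poly0 sub0r. Qed.
Lemma barC c : bar c%:P = c%:P. Proof. exact: comp_polyC. Qed.
Lemma barXn k : bar ('X^k) = 'X^(m.-1 * k).
Proof. by rewrite /bar comp_Xn_poly -exprM. Qed.

Lemma ii_comp p r : ii (p \Po r) = \sum_(k < size p) p`_k *: ii r ^+ k.
Proof.
rewrite comp_polyE linear_sum; apply: eq_bigr => k _.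
by rewrite linearZ /= rmorphXn.
Qed.

Lemma ii_bar_xm : ii (bar xm) = 0.
Proof.
rewrite /bar /xm1 comp_polyB comp_Xn_poly comp_polyC -exprM rmorphB /=.
by rewrite iXn modnMl expr0 rmorph1 subrr.
Qed.

Lemma ii_bar_compat p q : ii p = ii q -> ii (bar p) = ii (bar q).
Proof.
move=> h; have e : p %% xm = q %% xm.
  by move: (congr1 (fun x : Q => x : {poly F}) h); rewrite !iiE.
rewrite (divp_eq p xm) (divp_eq q xm) e !barD !barM !rmorphD !rmorphM /=.
by rewrite ii_bar_xm !mulr0 !add0r.
Qed.

Lemma ii_modR_eq p q : ii p = ii q -> modR m p = modR m q.
Proof. by move=> h; rewrite -!iiE h. Qed.

Lemma bar_bar p : ii (bar (bar p)) = ii p.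
Proof.
rewrite /bar -comp_polyA comp_Xn_poly -exprM ii_comp.
rewrite (@iXn_eq (m.-1 * m.-1) 1); last first.
  case: m hm => // n _ /=; apply/eqP; rewrite -(eqn_modDr n) -mulSnr ?modnMl ?modnMr.
  by rewrite add1n modnn.
rewrite expr1 -ii_comp comp_polyXr //.
Qed.

Lemma ii_barR p : ii (barR m p) = ii (bar p).
Proof.
rewrite /barR ii_mod.
rewrite -(@ii_bar_compat _ _ (ii_mod p)) [in ii (bar _)](@poly_summ _ (size_modR p)).
rewrite /bar raddf_sum /= !linear_sum /=; apply: eq_bigr => i _.
rewrite comp_polyZ comp_Xn_poly -exprM !linearZ /=; congr (_ *: _).
apply: iXn_eq; case: m hm i => // n _ [i /= hi].
by apply/eqP; rewrite -(eqn_modDr i) -mulSnr ?modnMl ?modnMr modnDml subnK ?modnn // ltnW.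
Qed.

Lemma modfact i j : (i < m)%N -> (j < m)%N ->
  (((i + m.-1 * j) %% m == 0) = (i == j))%N.
Proof.
case: m hm => // n _ hi hj /=.
have -> : ((i + n * j) %% n.+1 == 0)%N = (i + n * j == 0 %[mod n.+1])%N by rewrite mod0n.
by rewrite -(eqn_modDr j) add0n -addnA -mulSnr mulnC addnC modnMDl !modn_small.
Qed.

Lemma barZ c p : bar (c *: p) = c *: bar p. Proof. exact: comp_polyZ. Qed.

Lemma c0_sum (I : Type) (r : seq I) (P : pred I) (f : I -> Q) :
  ((\sum_(i <- r | P i) f i : Q) : {poly F})`_0 = \sum_(i <- r | P i) (f i : {poly F})`_0.
Proof. by rewrite poly_of_qpoly_sum coef_sum. Qed.

Lemma c0_scale c (x : Q) : ((c *: x : Q) : {poly F})`_0 = c * (x : {poly F})`_0.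
Proof. by rewrite poly_of_qpolyZ coefZ. Qed.

Lemma ii_sum (I : Type) (r : seq I) (P : pred I) (f : I -> {poly F}) :
  ii (\sum_(i <- r | P i) f i) = \sum_(i <- r | P i) ii (f i).
Proof. exact: raddf_sum. Qed.

Lemma bar_sum (I : Type) (r : seq I) (P : pred I) (f : I -> {poly F}) :
  bar (\sum_(i <- r | P i) f i) = \sum_(i <- r | P i) bar (f i).
Proof. exact: raddf_sum. Qed.

Lemma iiB p q : ii (p - q) = ii p - ii q. Proof. exact: raddfB. Qed.
Lemma iiN p : ii (- p) = - ii p. Proof. exact: raddfN. Qed.
Lemma iiX p k : ii (p ^+ k) = ii p ^+ k. Proof. exact: rmorphXn. Qed.

Lemma c0_term c d i j :
  ((ii ((c *: 'X^i) * bar (d *: 'X^j))) : {poly F})`_0 =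
  c * d * ((0 == (i + m.-1 * j) %% m)%N)%:R.
Proof.
rewrite barZ barXn -scalerAl -scalerAr scalerA -exprD in_qpolyZ c0_scale.
by rewrite coef_ii_Xn.
Qed.

Lemma pair_eq a b :
  \sum_(j < m) (modR m a)`_j * (modR m b)`_j = (modR m (a * bar b))`_0.
Proof.
have e : ii (a * bar b) = ii (modR m a * bar (modR m b)).
  by rewrite !in_qpolyM ii_mod (@ii_bar_compat (modR m b) b (ii_mod b)).
rewrite -[modR m (a * bar b)]iiE e.
have eA := @poly_summ _ (size_modR a); have eB := @poly_summ _ (size_modR b).
rewrite [X in ii (X * _)]eA [X in bar X]eB.
rewrite bar_sum big_distrl ii_sum c0_sum.
apply: eq_bigr => i _.
rewrite big_distrr ii_sum c0_sum.
rewrite (bigD1 i) // big1 => [|j hj].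
  by rewrite c0_term eq_sym modfact // eqxx mulr1 /= addr0.
rewrite c0_term eq_sym modfact //.
have -> : (i == j :> nat) = false by apply/negbTE; rewrite eq_sym; exact: hj.
by rewrite mulr0.
Qed.

Lemma bar0 : bar 0 = 0. Proof. exact: comp_poly0. Qed.

Lemma ND z : (forall r, (modR m (r * z))`_0 = 0) -> ii z = 0.
Proof.
move=> H.
have hb : modR m (bar z) = 0.
  apply/polyP => j; rewrite coef0.
  case: (ltnP j m) => hj; last by rewrite nth_default // (leq_trans (size_modR _) hj).
  have := H ('X^j).
  have -> : modR m ('X^j * z) = modR m ('X^j * bar (bar z)).
    by rewrite -!iiE !in_qpolyM bar_bar.
  rewrite -pair_eq -iiE ii_small ?size_polyXn //.
  rewrite (bigD1 (Ordinal hj)) //= big1 ?coefXn ?eqxx ?mul1r ?addr0 // => l hl.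
  rewrite coefXn; have -> : (l == j :> nat) = false by apply/negbTE; exact: hl.
  by rewrite mul0r.
have h0 : ii (bar z) = ii 0.
  by apply/val_inj; rewrite [LHS]iiE [RHS]iiE hb /modR mod0p.
by rewrite -bar_bar (@ii_bar_compat _ _ h0) bar0 raddf0.
Qed.

Lemma vecR_ii p q : ii p = ii q -> vecR m p = vecR m q.
Proof. by move/ii_modR_eq => e; rewrite /vecR e. Qed.

Lemma vecR_inj p q : vecR m p = vecR m q -> ii p = ii q.
Proof.
move=> e; apply/val_inj; rewrite [LHS]iiE [RHS]iiE; apply/polyP => j.
case: (ltnP j m) => hj.
  by have := congr1 (fun w : 'rV[F]_m => w 0 (Ordinal hj)) e; rewrite /= !mxE.
by rewrite !nth_default // (leq_trans (size_modR _) hj).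
Qed.

Lemma vecR_surj (w : 'rV[F]_m) : exists p, vecR m p = w.
Proof.
exists (\sum_(i < m) w 0 i *: 'X^i); apply/rowP => j; rewrite mxE.
rewrite -iiE ii_small; last first.
  apply: (leq_trans (size_sum _ _ _)); apply/bigmax_leqP => i _.
  by apply: (leq_trans (size_scale_leq _ _)); rewrite size_polyXn.
rewrite coef_sum (bigD1 j) //= coefZ coefXn eqxx mulr1 big1 ?addr0 // => l hl.
rewrite coefZ coefXn; have -> : (j == l :> nat) = false.
  by apply/negbTE; rewrite eq_sym; exact: hl.
by rewrite mulr0.
Qed.

Lemma formE_eq a1 a2 b1 b2 :
  formE ((vecR m a1, vecR m a2)) ((vecR m b1, vecR m b2)) =
  (modR m (a1 * bar b1 + a2 * bar b2))`_0.
Proof.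
rewrite /formE /=.
under eq_bigr do rewrite !mxE.
under [X in _ + X]eq_bigr do rewrite !mxE.
by rewrite !pair_eq /modR modpD coefD.
Qed.

Lemma recip_ii (p : {poly F}) : p != 0 ->
  ii (recip p) = ii ('X^((size p).-1) * bar p).
Proof.
move=> p0; set d := (size p).-1.
have sp : size p = d.+1 by rewrite prednK // size_poly_gt0.
rewrite /recip /bar comp_polyE sp poly_def big_distrr !ii_sum.
rewrite (reindex_inj rev_ord_inj); apply: eq_bigr => [[i hi]] _ /=.
have hid : (i <= d)%N by [].
rewrite !subSS subn0 subKn // -scalerAr !in_qpolyZ; congr (_ *: _).
rewrite -exprM -exprD; apply: iXn_eq.
case: m hm => // n _ /=.
by rewrite -{2}(subnK hid) -addnA -mulSn -modnDmr ?modnMl ?modnMr addn0.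
Qed.

Section Div.
Variable g : {poly F}.
Hypotheses (mg : g \is monic) (dg : g %| xm).
Local Notation h := (xm %/ g).

Lemma xm_eq : xm = h * g.
Proof. by rewrite divpK. Qed.

Lemma D1 z : ii (g * z) = 0 -> exists s, ii z = ii (h * s).
Proof.
move=> e.
have : xm %| g * z.
  apply/modp_eq0P; have := @ii_modR_eq _ 0 (etrans e (esym (raddf0 _))).
  by rewrite /modR mod0p.
rewrite {1}xm_eq mulrC dvdp_mul2l ?monic_neq0 // => hz.
by exists (z %/ h); rewrite mulrC divpK.
Qed.

Lemma h0_neq0 : h.[0] != 0.
Proof.
apply/eqP => e.
have : xm.[0] = 0 by rewrite {1}xm_eq hornerM e mul0r.
rewrite /xm1 !hornerE expr0n eqn0Ngt hm /= sub0r => /eqP.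
by rewrite oppr_eq0 oner_eq0.
Qed.

Lemma h_neq0 : h != 0.
Proof. by apply: contraNneq h0_neq0 => ->; rewrite horner0. Qed.

Lemma recipZ (c : F) (p : {poly F}) : c != 0 -> recip (c *: p) = c *: recip p.
Proof.
move=> c0; rewrite /recip size_scale //; apply/polyP => i.
by rewrite coefZ !coef_poly coefZ; case: ifP; rewrite ?mulr0.
Qed.

Lemma perp_eq : perpR m g = (h.[0])^-1 *: recip h.
Proof.
rewrite /perpR /=.
have : xm %/ gcdp (modR m g) xm %= h.
  apply: eqp_divr; apply: eqp_trans (gcdp_modl g xm) (dvdp_gcd_idl dg).
case/eqpP => [[c1 c2] /andP [/= c1n c2n] e].
have -> : xm %/ gcdp (modR m g) xm = (c2 / c1) *: h.
  by rewrite mulrC -scalerA -e scalerA mulVf // scale1r.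
have c21 : c2 / c1 != 0 by rewrite mulf_neq0 ?invr_eq0.
rewrite recipZ // hornerZ scalerA; congr (_ *: _).
by rewrite invfM mulrAC mulVf // mul1r.
Qed.

Lemma perp_ii :
  ii (perpR m g) = ii ((h.[0])^-1%:P * 'X^((size h).-1) * bar h).
Proof.
by rewrite perp_eq -mul_polyC in_qpolyM recip_ii ?h_neq0 // -in_qpolyM mulrA.
Qed.

Lemma P1 : ii (g * bar (perpR m g)) = 0.
Proof.
rewrite in_qpolyM (@ii_bar_compat _ _ perp_ii) !barM !in_qpolyM bar_bar barC.
transitivity (ii ((h.[0])^-1%:P) * ii (bar 'X^((size h).-1)) * ii (h * g)).
  by rewrite in_qpolyM; ring.
by rewrite -xm_eq ii_xm mulr0.
Qed.

Lemma P2 : exists k, ii (bar h) = ii (perpR m g * k).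
Proof.
set d := (size h).-1.
exists ((h.[0])%:P * 'X^(m.-1 * d)).
rewrite in_qpolyM perp_ii !in_qpolyM.
have e1 : ii ('X^d) * ii ('X^(m.-1 * d)) = 1.
  rewrite -in_qpolyM -exprD iXn.
  have -> : ((d + m.-1 * d) %% m = 0)%N.
    by case: m hm => // n _ /=; rewrite -mulSn modnMr.
  by rewrite expr0 in_qpoly1.
have e2 : ii ((h.[0])^-1%:P) * ii ((h.[0])%:P) = 1.
  by rewrite -in_qpolyM -polyCM mulVf ?h0_neq0 // in_qpoly1.
symmetry; transitivity (ii ((h.[0])^-1%:P) * ii ((h.[0])%:P) *
  (ii ('X^d) * ii ('X^(m.-1 * d))) * ii (bar h)); first by ring.
by rewrite e1 e2 !mul1r.
Qed.

End Div.

Lemma unitD D : coprimep D xm -> exists e, ii (D * e) = 1.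
Proof.
move=> cD; exists (qpoly_inv (ii D) : {poly F}).
rewrite in_qpolyM ii_val mulrC qpoly_mulVz //.
by rewrite iiE mk_monic_xm /modR coprimep_modr coprimep_sym.
Qed.

Lemma ii_eq0 p : ii p = 0 -> modR m p = 0.
Proof. by move=> H; rewrite (@ii_modR_eq _ 0 (etrans H (esym (raddf0 _)))) /modR mod0p. Qed.

Theorem thmA g1 g2 v1 v2 :
  g1 \is monic -> g2 \is monic -> g1 %| xm -> g2 %| xm ->
  coprimep (v1 * v2 - 1) xm ->
  forall c : word F m,
    dual (@formE F m) (QCcode g1 (v1 * g1) (v2 * g2) g2) c <->
    QCcode (perpR m g1) (- barR m v2 * perpR m g1)
           (- barR m v1 * perpR m g2) (perpR m g2) c.
Proof.
move=> m1 m2 d1 d2 cop c; split.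
- case: c => c1 c2 Hd.
  have [w1 ew1] := vecR_surj c1; have [w2 ew2] := vecR_surj c2.
  rewrite -ew1 -ew2 in Hd *.
  have key : forall r1 r2, (modR m ((r1 * g1 + r2 * (v2 * g2)) * bar w1 +
                 (r1 * (v1 * g1) + r2 * g2) * bar w2))`_0 = 0.
    by move=> r1 r2; rewrite -formE_eq; apply: Hd; exists r1, r2.
  have z1 : ii (g1 * (bar w1 + v1 * bar w2)) = 0.
    apply: ND => r; rewrite -[X in _ = X](key r 0); do 3 f_equal; ring.
  have z2 : ii (g2 * (v2 * bar w1 + bar w2)) = 0.
    apply: ND => r; rewrite -[X in _ = X](key 0 r); do 3 f_equal; ring.
  have [t1 ht1] := @D1 g1 m1 d1 _ z1; have [t2 ht2] := @D1 g2 m2 d2 _ z2.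
  have [e he] := @unitD _ cop.
  have [k1 hk1] := @P2 g1 d1; have [k2 hk2] := @P2 g2 d2.
  rewrite !in_qpolyM !in_qpolyD !in_qpolyM in ht1 ht2.
  rewrite in_qpolyM iiB in_qpolyM in_qpoly1 in he.
  have eb1 : ii (bar w1) = ii (e * (v1 * ((xm %/ g2) * t2) - (xm %/ g1) * t1)).
    rewrite !in_qpolyM iiB !in_qpolyM -ht1 -ht2 -[LHS]mul1r -he; ring.
  have eb2 : ii (bar w2) = ii (e * (v2 * ((xm %/ g1) * t1) - (xm %/ g2) * t2)).
    rewrite !in_qpolyM iiB !in_qpolyM -ht1 -ht2 -[LHS]mul1r -he; ring.
  exists (- (bar e * bar t1 * k1)), (- (bar e * bar t2 * k2)).
  congr pair; apply: vecR_ii.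
    rewrite -[ii w1]bar_bar (@ii_bar_compat _ _ eb1).
    rewrite !barM barB !barM !(in_qpolyM, iiB) hk1 hk2 !in_qpolyM.
    rewrite !(in_qpolyD, in_qpolyM, iiN) ii_barR; ring.
  rewrite -[ii w2]bar_bar (@ii_bar_compat _ _ eb2).
  rewrite !barM barB !barM !(in_qpolyM, iiB) hk1 hk2 !in_qpolyM.
  rewrite !(in_qpolyD, in_qpolyM, iiN) ii_barR; ring.
- case=> r1 [r2 ->] u [s1 [s2 ->]].
  rewrite formE_eq ii_eq0 ?coef0 //.
  have q1 := @P1 g1 d1; have q2 := @P1 g2 d2.
  rewrite in_qpolyM in q1; rewrite in_qpolyM in q2.
  have bv1 : ii (bar (barR m v1)) = ii v1.
    by rewrite (@ii_bar_compat _ _ (ii_barR v1)) bar_bar.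
  have bv2 : ii (bar (barR m v2)) = ii v2.
    by rewrite (@ii_bar_compat _ _ (ii_barR v2)) bar_bar.
  rewrite !barD !barM !barN ?barM !(in_qpolyD, in_qpolyM, iiN) bv1 bv2.
  set B1 := ii (bar (perpR m g1)) in q1 *; set B2 := ii (bar (perpR m g2)) in q2 *.
  transitivity ((1 - ii v1 * ii v2) * (ii s1 * ii (bar r1) * (ii g1 * B1) +
      ii s2 * ii (bar r2) * (ii g2 * B2))); first by ring.
  by rewrite q1 q2 !mulr0 addr0 mulr0.
Qed.

Lemma vecRN (p : {poly F}) : vecR m (- p) = - vecR m p.
Proof. by apply/rowP => i; rewrite !mxE /modR modNp coefN. Qed.

Lemma QC_ii (u11 u12 u21 u22 a b : {poly F}) :
  QCcode u11 u12 u21 u22 (vecR m a, vecR m b) <->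
  exists r1 r2, ii a = ii (r1 * u11 + r2 * u21) /\ ii b = ii (r1 * u12 + r2 * u22).
Proof.
split.
  case=> r1 [r2 [e1 e2]]; exists r1, r2.
  by split; apply: vecR_inj.
case=> r1 [r2 [e1 e2]]; exists r1, r2.
by rewrite (@vecR_ii _ _ e1) (@vecR_ii _ _ e2).
Qed.

Lemma QC_compat (a b c d a' b' c' d' : {poly F}) (w : word F m) :
  ii a = ii a' -> ii b = ii b' -> ii c = ii c' -> ii d = ii d' ->
  QCcode a b c d w -> QCcode a' b' c' d' w.
Proof.
move=> ea eb ec ed [r1 [r2 ->]]; exists r1, r2.
congr pair; apply: vecR_ii; by rewrite !(in_qpolyD, in_qpolyM) ?ea ?eb ?ec ?ed.
Qed.

Theorem thmC g1 g2 v1 v2 :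
  g1 \is monic -> g2 \is monic -> g1 %| xm -> g2 %| xm ->
  coprimep (v1 * v2 - 1) xm ->
  forall c : word F m,
    dual (@formS F m) (QCcode g1 (v1 * g1) (v2 * g2) g2) c <->
    QCcode (perpR m g2) (barR m v1 * perpR m g2)
           (barR m v2 * perpR m g1) (perpR m g1) c.
Proof.
move=> m1 m2 d1 d2 cop [c1 c2].
have eS : forall u, formS u (c1, c2) = formE u (c2, - c1).
  move=> u; rewrite /formS /formE -big_split /=; apply: eq_bigr => i _.
  by rewrite mxE mulrN.
have -> : dual (@formS F m) (QCcode g1 (v1 * g1) (v2 * g2) g2) (c1, c2) <->
          dual (@formE F m) (QCcode g1 (v1 * g1) (v2 * g2) g2) (c2, - c1).
  by split => H u hu; [rewrite -eS | rewrite eS]; apply: H.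
rewrite thmA //.
have [w1 <-] := vecR_surj c1; have [w2 <-] := vecR_surj c2.
rewrite -vecRN !QC_ii.
have bv1 := ii_barR v1; have bv2 := ii_barR v2.
split; case=> r1 [r2 [e1 e2]].
  exists (- r2), r1; move: e1 e2; rewrite !(in_qpolyD, in_qpolyM, iiN) => e1 e2.
  by rewrite -[ii w1]opprK e2 e1; split; ring.
exists r2, (- r1); move: e1 e2; rewrite !(in_qpolyD, in_qpolyM, iiN) => e1 e2.
by rewrite e1 e2; split; ring.
Qed.

End Core.

Section Herm.
Variables (F : finFieldType) (q m : nat).
Hypotheses (Hq : #|F| = (q ^ 2)%N) (hm : (0 < m)%N).
Local Notation Phi := (map_poly (frqM Hq)).
Local Notation xm := (xm1 F m).
Local Notation ii := (in_qpoly xm).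

Lemma PhiK p : Phi (Phi p) = p.
Proof. by apply/polyP => i; rewrite !coef_map /= frqK. Qed.

Lemma PhiM p p' : Phi (p * p') = Phi p * Phi p'. Proof. exact: rmorphM. Qed.
Lemma PhiD p p' : Phi (p + p') = Phi p + Phi p'. Proof. exact: rmorphD. Qed.
Lemma PhiB p p' : Phi (p - p') = Phi p - Phi p'. Proof. exact: rmorphB. Qed.
Lemma PhiN p : Phi (- p) = - Phi p. Proof. exact: rmorphN. Qed.

Lemma Phi_xm : Phi xm = xm.
Proof. by rewrite /xm1 PhiB map_polyXn rmorph1. Qed.

Lemma Phi_mod p : Phi (modR m p) = modR m (Phi p).
Proof. by rewrite /modR map_modp Phi_xm. Qed.

Lemma Phi_ii p p' : ii p = ii p' -> ii (Phi p) = ii (Phi p').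
Proof.
move/(ii_modR_eq hm) => e; apply/val_inj.
by rewrite [LHS](iiE hm) [RHS](iiE hm) -!Phi_mod e.
Qed.

Lemma frobR_eq k : frobR m q k = Phi (modR m k).
Proof. reflexivity. Qed.

Lemma formH_eq a1 a2 (c : word F m) :
  formH q (vecR m a1, vecR m a2) c = formE (vecR m (Phi a1), vecR m (Phi a2)) c.
Proof.
rewrite /formH /formE /=; congr (_ + _); apply: eq_bigr => i _;
by rewrite !mxE -Phi_mod coef_map.
Qed.

Lemma dualH_E g1 g2 v1 v2 (c : word F m) :
  dual (@formH F m q) (QCcode g1 (v1 * g1) (v2 * g2) g2) c <->
  dual (@formE F m) (QCcode (Phi g1) (Phi v1 * Phi g1) (Phi v2 * Phi g2) (Phi g2)) c.
Proof.
split => H u [r1 [r2 ->]].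
  have hu : QCcode g1 (v1 * g1) (v2 * g2) g2
     (vecR m (Phi r1 * g1 + Phi r2 * (v2 * g2)), vecR m (Phi r1 * (v1 * g1) + Phi r2 * g2)).
    by exists (Phi r1), (Phi r2).
  by have := H _ hu; rewrite formH_eq !(PhiD, PhiM) !PhiK.
rewrite formH_eq; apply: H; exists (Phi r1), (Phi r2).
by rewrite !(PhiD, PhiM).
Qed.

Lemma perpR_mod (k k' : {poly F}) : modR m k = modR m k' -> perpR m k = perpR m k'.
Proof. by rewrite /perpR => ->. Qed.

Lemma perpH_eq g : perpHR m q g = perpR m (Phi g).
Proof.
apply: perpR_mod; rewrite frobR_eq -[LHS]Phi_mod -[RHS]Phi_mod.
by rewrite /modR modp_id.
Qed.

Lemma frob_bar v : ii (frobR m q (barR m v)) = ii (barR m (Phi v)).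
Proof.
rewrite frobR_eq (ii_barR hm).
have -> : bar m (Phi v) = Phi (bar m v) by rewrite /bar map_comp_poly map_polyXn.
rewrite (Phi_ii (ii_mod hm _)).
apply: Phi_ii; exact: (ii_barR hm).
Qed.

Theorem thmB g1 g2 v1 v2 :
  g1 \is monic -> g2 \is monic -> g1 %| xm -> g2 %| xm ->
  coprimep (v1 * v2 - 1) xm ->
  forall c : word F m,
    dual (@formH F m q) (QCcode g1 (v1 * g1) (v2 * g2) g2) c <->
    QCcode (perpHR m q g1) (- frobR m q (barR m v2) * perpHR m q g1)
           (- frobR m q (barR m v1) * perpHR m q g2) (perpHR m q g2) c.
Proof.
move=> m1 m2 d1 d2 cop c.
rewrite dualH_E (thmA hm); first last.
- by rewrite -Phi_xm -PhiM -[1](rmorph1 (map_poly (frqM Hq))) -PhiB coprimep_map.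
- by rewrite -Phi_xm dvdp_map.
- by rewrite -Phi_xm dvdp_map.
- by rewrite map_monic.
- by rewrite map_monic.
rewrite !perpH_eq.
split; apply: (QC_compat hm) => //; rewrite !(in_qpolyM, iiN) ?frob_bar //.
Qed.
End Herm.

Theorem mainTheorem5 :
  (* (A) Euclidean dual over F_q *)
  (forall (F : finFieldType) (m : nat) (g1 g2 v1 v2 : {poly F}),
     (0 < m)%N ->
     g1 \is monic -> g2 \is monic ->
     g1 %| xm1 F m -> g2 %| xm1 F m ->
     (size v1 <= m)%N -> (size v2 <= m)%N ->
     coprimep (v1 * v2 - 1) (xm1 F m) ->
     forall c : word F m,
       dual (@formE F m) (QCcode g1 (v1 * g1) (v2 * g2) g2) c <->
       QCcode (perpR m g1) (- barR m v2 * perpR m g1)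
              (- barR m v1 * perpR m g2) (perpR m g2) c)
  /\
  (* (B) Hermitian dual over F_{q^2} *)
  (forall (F : finFieldType) (q m : nat) (g1 g2 v1 v2 : {poly F}),
     #|F| = (q ^ 2)%N ->
     (0 < m)%N ->
     g1 \is monic -> g2 \is monic ->
     g1 %| xm1 F m -> g2 %| xm1 F m ->
     (size v1 <= m)%N -> (size v2 <= m)%N ->
     coprimep (v1 * v2 - 1) (xm1 F m) ->
     forall c : word F m,
       dual (@formH F m q) (QCcode g1 (v1 * g1) (v2 * g2) g2) c <->
       QCcode (perpHR m q g1) (- frobR m q (barR m v2) * perpHR m q g1)
              (- frobR m q (barR m v1) * perpHR m q g2) (perpHR m q g2) c)
  /\
  (* (C) symplectic dual over F_q *)
  (forall (F : finFieldType) (m : nat) (g1 g2 v1 v2 : {poly F}),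
     (0 < m)%N ->
     g1 \is monic -> g2 \is monic ->
     g1 %| xm1 F m -> g2 %| xm1 F m ->
     (size v1 <= m)%N -> (size v2 <= m)%N ->
     coprimep (v1 * v2 - 1) (xm1 F m) ->
     forall c : word F m,
       dual (@formS F m) (QCcode g1 (v1 * g1) (v2 * g2) g2) c <->
       QCcode (perpR m g2) (barR m v1 * perpR m g2)
              (barR m v2 * perpR m g1) (perpR m g1) c).
Proof.
split; [|split].
- move=> F m g1 g2 v1 v2 hm m1 m2 d1 d2 _ _ cop c.
  exact: (thmA hm m1 m2 d1 d2 cop c).
- move=> F q m g1 g2 v1 v2 Hq hm m1 m2 d1 d2 _ _ cop c.
  exact: (thmB Hq hm m1 m2 d1 d2 cop c).
- move=> F m g1 g2 v1 v2 hm m1 m2 d1 d2 _ _ cop c.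
  exact: (thmC hm m1 m2 d1 d2 cop c).
Qed.
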